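(* Let $\sigma_{naive}$ be naive semantics. For every two argumentation frameworks $AF=(AR,Attacks)$, $AF'=(AR',Attacks')$ with $AF\preceq_N AF'$ and every $E\in\sigma_{naive}(AF)$, there exists $E'\in\sigma_{naive}(AF')$ with $E'\not\subseteq AR$ or $E'=E$.
   Context: An argumentation framework is a pair $(AR,Attacks)$ with $AR$ a finite set and $Attacks\subseteq AR\times AR$; $a$ attacks $b$ iff $(a,b)\in Attacks$. A set $S\subseteq AR$ is conflict-free iff no element of $S$ attacks an element of $S$. $\sigma_{naive}(AF)$ is the set of all $\subseteq$-maximal conflict-free subsets of $AR$. $AF\preceq_N AF'$ (normal expansion) iff $AR\subseteq AR'$, $Attacks\subseteq Attacks'$ and no $(a,b)\in Attacks'\setminus Attacks$ has both $a,b\in AR$. *)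

(* Defs.v *)
From mathcomp Require Import all_boot.
Set Implicit Arguments. Unset Strict Implicit. Unset Printing Implicit Defensive.

Record AF (T : finType) := mkAF {
  AR : {set T};
  Att : {set T * T};
  Att_sub : Att \subset setX AR AR
}.

Definition attacks (T : finType) (F : AF T) (a b : T) : bool := (a, b) \in Att F.

Definition conflict_free (T : finType) (F : AF T) (S : {set T}) : bool :=
  (S \subset AR F) && [forall a in S, forall b in S, ~~ attacks F a b].

Definition naive (T : finType) (F : AF T) (E : {set T}) : Prop :=
  conflict_free F E /\
  (forall S : {set T}, conflict_free F S -> E \subset S -> S = E).

Definition normal_expansion (T : finType) (F F' : AF T) : Prop :=
  AR F \subset AR F' /\ Att F \subset Att F' /\
  (forall a b : T, (a, b) \in Att F' -> (a, b) \notin Att F ->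
     ~ (a \in AR F /\ b \in AR F)).

(* Main.v *)
Require Import Defs.
From mathcomp Require Import all_boot.

Theorem proposition36 (T : finType) (F F' : AF T) :
  normal_expansion F F' ->
  forall E : {set T}, naive F E ->
  exists E' : {set T}, naive F' E' /\ (~~ (E' \subset AR F) \/ E' = E).
Proof.
move=> [sAR [sAtt nrm]] E [cfE maxE].
have cfE' : conflict_free F' E.
  move: cfE => /andP [sE /forallP cf]; apply/andP; split.
    exact: subset_trans sE sAR.
  apply/forallP => a; apply/implyP => aE; apply/forallP => b; apply/implyP => bE.
  apply/negP => ab.
  have := cf a; rewrite aE /= => /forallP /(_ b); rewrite bE /= => nab.
  apply: (nrm a b ab nab); split; exact: (subsetP sE).
have [E' mE' sEE'] := maxset_exists cfE'.
move/maxsetP: mE' => [cf' mx'].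
exists E'; split; first by split.
case sub: (E' \subset AR F); [right | by left].
apply: maxE => //.
move: cf' => /andP [_ /forallP cf]; apply/andP; split => //.
apply/forallP => a; apply/implyP => aE; apply/forallP => b; apply/implyP => bE.
apply/negP => ab.
have := cf a; rewrite aE /= => /forallP /(_ b); rewrite bE /= => nab.
by move/negP: nab; apply; apply: (subsetP sAtt).
Qed.
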